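(* Let $n\geq 4$ and let $P$ be a convex $n$-gon with vertices labelled $0,1,\dots,n-1$ in cyclic order (indices taken modulo $n$). Let $a$ be a fixed vertex of $P$ and let $m$ be an integer with $0\leq m\leq n-3$. Then the number of triangulations of $P$ that use none of the $m$ diagonals $a(a+2), a(a+3),\dots, a(a+m+1)$ is \[\sum_{i=0}^{n-3-m} C_i C_{n-3-i},\] where $C_k=\frac{1}{k+1}\binom{2k}{k}$ is the $k$th Catalan number.
   Context: A triangulation of a convex polygon uses non-crossing diagonals to divide it into triangles. *)

(* Defs.v *)
From mathcomp Require Import all_boot.
Set Implicit Arguments. Unset Strict Implicit. Unset Printing Implicit Defensive.

(* A diagonal is stored as an ordered pair (i, j) with i < j, the two
   vertices not cyclically adjacent (j - i >= 2 and not {0, n-1}). *)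
Definition is_diag (n : nat) (d : 'I_n * 'I_n) : bool :=
  [&& (d.1 : nat) < d.2, (d.1 : nat).+1 < d.2 & ~~ (((d.1 : nat) == 0) && ((d.2 : nat) == n.-1))].

(* Two diagonals cross (in their interiors) iff their endpoints interleave
   strictly around the polygon. *)
Definition crossing (n : nat) (d e : 'I_n * 'I_n) : bool :=
  ((d.1 < e.1 < d.2) && (d.2 < e.2)) || ((e.1 < d.1 < e.2) && (e.2 < d.2)).

Definition triangulation (n : nat) (T : {set 'I_n * 'I_n}) : bool :=
  [&& [forall d in T, is_diag d],
      [forall d in T, forall e in T, ~~ crossing d e]
    & [forall d, (is_diag d && (d \notin T)) ==> [exists e in T, crossing d e]]].

Definition has_diag (n : nat) (T : {set 'I_n * 'I_n}) (u v : nat) : bool :=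
  [exists d in T, (((d.1 : nat) == u) && ((d.2 : nat) == v))
                  || (((d.1 : nat) == v) && ((d.2 : nat) == u))].

Definition catalan (k : nat) : nat := 'C(k.*2, k) %/ k.+1.

(* Main.v *)
Require Import Defs.
From mathcomp Require Import all_boot.
From mathcomp Require Import all_order all_algebra zify ring.
Import GRing.Theory.
Set Implicit Arguments. Unset Strict Implicit. Unset Printing Implicit Defensive.

Import GRing.Theory.

Definition bm (N k : nat) : nat := if k is k'.+1 then 'C(N, k') else 0.
Definition Bn (s k : nat) : int := ('C(k.*2 + s, k))%:Z - (bm (k.*2 + s) k)%:Z.
Definition Fn (s k : nat) : int := if s is s'.+1 then Bn s' k else (k == 0)%:Z.

Lemma Fn0 s : Fn s 0 = 1%R.
Proof. case: s => [|s] //=. rewrite /Bn /= bin0 //. Qed.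

Lemma bmS N k : 'C(N.+1, k) = bm N k + 'C(N, k).
Proof. case: k => [|k] /=; first by rewrite !bin0. by rewrite binS addnC. Qed.

Lemma FnS s k : Fn s.+1 k.+1 = (Fn s k.+1 + Fn s.+2 k)%R.
Proof.
rewrite /Fn /Bn.
have d : (k.+1).*2 = k.*2.+2 by rewrite doubleS.
case: s => [|t].
- have f0 : bm (k.+1.*2 + 0) k.+1 = 'C(k.*2.+2, k) by rewrite /bm addn0 d.
  have e1 : (k.+1).*2 + 0 = (k.*2.+1).+1 by rewrite d addn0.
  have e2 : k.*2 + 1 = k.*2.+1 by lia.
  rewrite f0 e1 e2.
  have f1 := binS k.*2.+1 k.
  have f2 := bmS k.*2.+1 k.
  have f3 : 'C(k.*2.+1, k.+1) = 'C(k.*2.+1, k).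
    have h : k.*2.+1 - k = k.+1 by lia.
    by rewrite -h bin_sub; [|lia].
  lia.
- have e1 : (k.+1).*2 + t.+1 = (k.*2 + t.+2).+1 by rewrite d; lia.
  have e2 : (k.+1).*2 + t = k.*2 + t.+2 by rewrite d; lia.
  have f0 : forall N, bm N k.+1 = 'C(N, k) by [].
  rewrite e1 e2 !f0.
  have f1 := binS (k.*2 + t.+2) k.
  have f2 := bmS (k.*2 + t.+2) k.
  lia.
Qed.


Lemma catalan_Bn k : Posz (catalan k) = Bn 0 k.
Proof.
rewrite /catalan /Bn addn0.
case: k => [|k]; first by rewrite /= bin0 divn1.
rewrite /bm.
have h := mul_bin_left (k.+1).*2 k.
have e : (k.+1).*2 - k = k.+2 by rewrite doubleS; lia.
rewrite e in h.
have : k.+1 * 'C(k.+1.*2, k.+1) <= k.+2 * 'C(k.+1.*2, k.+1) by apply: leq_mul.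
move=> hle.
have E : 'C(k.+1.*2, k.+1) = k.+2 * ('C(k.+1.*2, k.+1) - 'C(k.+1.*2, k)).
  rewrite mulnBr -h; lia.
rewrite {1}E mulKn //.
have : 'C(k.+1.*2, k) <= 'C(k.+1.*2, k.+1) by nia.
lia.
Qed.

Open Scope ring_scope.

Section CatRec.
Variable K : nat.
Hypothesis crec : forall k, (k < K)%N ->
  catalan k.+1 = (\sum_(i < k.+1) catalan i * catalan (k - i))%N.
Let P : {poly int} := \poly_(i < K.+1) (catalan i)%:R.

Lemma coefP i : (i <= K)%N -> P`_i = (catalan i)%:R.
Proof. by move=> h; rewrite coef_poly ltnS h. Qed.

Lemma PE i : (i <= K)%N -> (P - 1 - 'X * P^+2)`_i = 0.
Proof.
move=> hi; rewrite !coefB coefXM coef1 coefP //.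
case: i hi => [|i] hi /=.
  by rewrite /catalan /= subr0 subrr.
rewrite subr0 expr2 coefM crec // natr_sum.
apply/eqP; rewrite subr_eq0; apply/eqP; apply: eq_bigr => j _.
have hj := ltn_ord j. rewrite natrM !coefP //; lia.
Qed.

Lemma Pcoef k : (k <= K)%N -> forall s, (P^+s)`_k = Fn s k.
Proof.
elim: k => [|k IHk] hk s.
  rewrite Fn0. elim: s => [|s IHs]; first by rewrite expr0 coef1.
  by rewrite exprS coef0M IHs mulr1 coefP // /catalan /= divn1 bin0.
elim: s => [|s IHs]; first by rewrite expr0 coef1.
rewrite exprSr.
have -> : P^+s * P = P^+s + 'X * P^+s.+2 + P^+s * (P - 1 - 'X * P^+2).
  by rewrite !exprS expr0; set Q := P^+s; ring.
rewrite !coefD coefXM /= IHs IHk ?(ltnW hk) // -[Bn s k.+1]/(Fn s.+1 k.+1) FnS.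
rewrite coefM big1 ?addr0 // => j _.
rewrite PE ?mulr0 //; lia.
Qed.

Lemma catalan_step : catalan K.+1 = (\sum_(i < K.+1) catalan i * catalan (K - i))%N.
Proof.
apply/eqP; rewrite -eqz_nat; apply/eqP.
rewrite catalan_Bn -[Bn 0 K.+1]/(Fn 1 K.+1) FnS /= add0r -[Bn 1 K]/(Fn 2 K) -Pcoef // -natz.
rewrite expr2 coefM natr_sum; apply: eq_bigr => j _.
have hj := ltn_ord j. rewrite natrM !coefP //; lia.
Qed.
End CatRec.

Lemma catalan_rec k : catalan k.+1 = (\sum_(i < k.+1) catalan i * catalan (k - i))%N.
Proof.
elim/ltn_ind: k => k IH; apply: catalan_step => j hj; exact: IH.
Qed.

Close Scope ring_scope.


Ltac dpairs := repeat match goal with x : ?T |- _ =>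
  let T' := eval hnf in T in lazymatch T' with prod _ _ => destruct x end end.
Ltac plia := dpairs; cbn [fst snd] in *; lia.

Section Poly.
Variable n : nat.
Implicit Types (T : {set 'I_n * 'I_n}) (d e : 'I_n * 'I_n).

Definition diagI (p q : nat) d : bool :=
  [&& p <= d.1, (d.1 : nat).+1 < d.2, d.2 <= q & ~~ (((d.1:nat) == p) && ((d.2:nat) == q))].

Definition triI p q T : bool :=
  [&& [forall d in T, diagI p q d], [forall d in T, forall e in T, ~~ crossing d e]
    & [forall d, (diagI p q d && (d \notin T)) ==> [exists e in T, crossing d e]]].

Definition hasP T (x y : nat) := [exists d in T, ((d.1:nat) == x) && ((d.2:nat) == y)].
Definition present T (x y : nat) := (x.+1 == y) || hasP T x y.
Definition apex p q j T := [&& triI p q T, present T p j & present T j q].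

Lemma triIP p q T : triI p q T ->
  [/\ forall d, d \in T -> diagI p q d,
      forall d e, d \in T -> e \in T -> ~~ crossing d e &
      forall d, diagI p q d -> d \notin T -> exists2 e, e \in T & crossing d e].
Proof.
case/and3P => /forall_inP H1 H2 /forallP H3; split => //.
- move=> d e hd he; exact: (forall_inP (forall_inP H2 d hd) e he).
- move=> d hd hn; have := H3 d; rewrite hd hn /= => /exists_inP[e he hc]; by exists e.
Qed.

Lemma triI_intro p q T :
  (forall d, d \in T -> diagI p q d) ->
  (forall d e, d \in T -> e \in T -> ~~ crossing d e) ->
  (forall d, diagI p q d -> d \notin T -> exists2 e, e \in T & crossing d e) ->
  triI p q T.
Proof.
move=> H1 H2 H3; apply/and3P; split.
- by apply/forall_inP.
- apply/forall_inP => d hd; apply/forall_inP => e he; exact: H2.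
- apply/forallP => d; apply/implyP => /andP[hd hn].
  by case: (H3 d hd hn) => e he hc; apply/exists_inP; exists e.
Qed.

Lemma hasPP T x y : hasP T x y -> exists2 d, d \in T & ((d.1:nat) = x /\ (d.2:nat) = y).
Proof. by case/exists_inP => d hd /andP[/eqP h1 /eqP h2]; exists d. Qed.

Lemma hasP_intro T d : d \in T -> hasP T d.1 d.2.
Proof. by move=> hd; apply/exists_inP; exists d; rewrite ?eqxx. Qed.

Lemma pair_eq d e : (d.1:nat) = e.1 -> (d.2:nat) = e.2 -> d = e.
Proof.
case: d e => [d1 d2] [e1 e2] /= h1 h2.
by rewrite (val_inj h1) (val_inj h2).
Qed.

Lemma tri_small p q : q <= p.+1 -> [set T | triI p q T] = [set set0].
Proof.
move=> hq; apply/setP => T; rewrite !inE.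
apply/idP/idP.
- case/triIP => H1 _ _; apply/eqP/setP => d; rewrite inE.
  apply/negP => hd; have := H1 d hd; rewrite /diagI; plia.
- move/eqP ->; apply: triI_intro => [d|d e|d]; rewrite ?inE //.
  rewrite /diagI; plia.
Qed.

Lemma apex_exists p q T : p.+1 < q -> q < n -> triI p q T ->
  exists j, [/\ p < j < q, present T p j & present T j q].
Proof.
move=> hpq hqn hT; have [H1 H2 H3] := triIP hT.
pose P j := (p < j < q) && present T p j.
have exP : exists j, P j by exists p.+1; rewrite /P /present eqxx; plia.
have ubP : forall j, P j -> j <= q by move=> j /andP[h _]; plia.
case: (ex_maxnP exP ubP) => J /andP[hJ hpJ] hmax.
exists J; split => //.
apply/orP; case hJq: (J.+1 == q); [by left | right].
case hh: (hasP T J q) => //; have hn : ~ hasP T J q by rewrite hh.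
have hJn : J < n by plia.
pose d0 : 'I_n * 'I_n := (Ordinal hJn, Ordinal hqn).
have hd0 : diagI p q d0 by rewrite /diagI /=; plia.
have hd0T : d0 \notin T by apply/negP => h; apply: hn; exact: (hasP_intro h).
case: (H3 d0 hd0 hd0T) => e he hc.
have he' := H1 e he.
move: hc; rewrite /crossing /d0 /= => hc.
case: (eqVneq (e.1 : nat) p) => he1.
- have : P e.2. rewrite /P; apply/andP; split. rewrite /diagI in he'. rewrite /diagI in he'; plia.
    apply/orP; right; rewrite -he1; exact: hasP_intro.
  move/hmax; rewrite /diagI in he'; plia.
- move: hpJ; rewrite /present => /orP[/eqP hpJ|/hasPP[f hf [f1 f2]]].
  + rewrite /diagI in he'; plia.
  + have := H2 f e hf he; rewrite /crossing f1 f2; rewrite /diagI in he'; plia.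
Qed.

Lemma apex_unique p q T j j' : triI p q T -> p < j < q -> p < j' < q ->
  present T p j -> present T j q -> present T p j' -> present T j' q -> j = j'.
Proof.
move=> hT hj hj' a1 a2 a3 a4; have [H1 H2 H3] := triIP hT.
wlog hlt : j j' hj hj' a1 a2 a3 a4 / j < j'.
  move=> W; case: (ltngtP j j') => h; [exact: W| |done].
  by symmetry; apply: W.
move: a2 a3; rewrite /present => /orP[/eqP a2|/hasPP[f hf [f1 f2]]]; first plia.
case/orP => [/eqP a3|/hasPP[g hg [g1 g2]]]; first plia.
have := H2 f g hf hg; rewrite /crossing f1 f2 g1 g2; plia.
Qed.


Lemma cs (X : finType) (A : {set X}) : #|A| = \sum_(x : X) (x \in A : nat).
Proof. by rewrite -sum1_card big_mkcond /=; apply: eq_bigr => x _; case: (x \in A). Qed.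

Lemma tri_sum p q : p.+1 < q -> q < n ->
  #|[set T | triI p q T]| = \sum_(p.+1 <= j < q) #|[set T | apex p q j T]|.
Proof.
move=> hpq hqn.
rewrite cs.
under [RHS]eq_bigr => j _ do rewrite cs.
rewrite exchange_big /=; apply: eq_bigr => T _.
rewrite inE; case hT: (triI p q T).
- have [j0 [hj0 a1 a2]] := apex_exists hpq hqn hT.
  have mem : j0 \in index_iota p.+1 q by rewrite mem_index_iota; plia.
  rewrite (bigD1_seq j0 mem (iota_uniq _ _)) /= inE /apex hT a1 a2 /= big1_seq // => j /andP[hne hj].
  rewrite inE /apex hT /=; case hb: (present T p j && present T j q) => //.
  move/andP: hb => [b1 b2].
  move: hj; rewrite mem_index_iota => hj.
  have := apex_unique hT hj0 _ a1 a2 b1 b2; move: hne => /eqP hne.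
  by move=> /(_ ltac:(plia)) h; exfalso; apply: hne; rewrite h.
- by rewrite big1_seq // => j _; rewrite inE /apex hT.
Qed.

Definition Ej p q j : {set 'I_n * 'I_n} :=
  [set d | diagI p q d && ((((d.1:nat) == p) && ((d.2:nat) == j)) || (((d.1:nat) == j) && ((d.2:nat) == q)))].
Definition glue p q j (X : {set 'I_n * 'I_n} * {set 'I_n * 'I_n}) := X.1 :|: X.2 :|: Ej p q j.

Lemma glue_rec p q j T1 T2 : p < j < q -> triI p j T1 -> triI j q T2 ->
  glue p q j (T1, T2) :&: [set d | diagI p j d] = T1 /\
  glue p q j (T1, T2) :&: [set d | diagI j q d] = T2.
Proof.
move=> hj hT1 hT2; have [A1 _ _] := triIP hT1; have [B1 _ _] := triIP hT2.
split; apply/setP => d; rewrite !inE /=.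
- case h1: (d \in T1) => /=; first by rewrite A1.
  case h2: (d \in T2) => /=; first by apply/negbTE; move: (B1 d h2); rewrite /diagI; plia.
  apply/negbTE; rewrite /diagI; plia.
- case h2: (d \in T2); first by rewrite orbT /= B1.
  rewrite orbF; case h1: (d \in T1) => /=; first by apply/negbTE; move: (A1 d h1); rewrite /diagI; plia.
  apply/negbTE; rewrite /diagI; plia.
Qed.

Lemma glue_apex p q j T1 T2 : p < j < q -> q < n -> triI p j T1 -> triI j q T2 ->
  apex p q j (glue p q j (T1, T2)).
Proof.
move=> hj hqn hT1 hT2; have [A1 A2 A3] := triIP hT1; have [B1 B2 B3] := triIP hT2.
have hjn : j < n by plia.
have hpn : p < n by plia.
apply/and3P; split.
- apply: triI_intro.
  + move=> d; rewrite !inE /= -!orbA => /or3P[h|h|h].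
    * by move: (A1 d h); rewrite /diagI; plia.
    * by move: (B1 d h); rewrite /diagI; plia.
    * by move: h => /andP[].
  + move=> d e; rewrite !inE /= -!orbA => /or3P[hd|hd|hd] /or3P[he|he|he];
    first [ by apply: A2 | by apply: B2 | idtac ];
    try move: (A1 _ hd); try move: (B1 _ hd); try move: (A1 _ he); try move: (B1 _ he);
    rewrite /diagI /crossing; plia.
  + move=> d hd; rewrite !inE /= -!orbA => /norP[hn1 /norP[hn2 hn3]].
    case: (leqP (d.2 : nat) j) => h2.
      have hdL : diagI p j d by move: hn3 hd; rewrite /diagI; plia.
      by case: (A3 d hdL hn1) => e he hc; exists e; rewrite // !inE he.
    case: (leqP j (d.1 : nat)) => h1.
      have hdR : diagI j q d by move: hn3 hd; rewrite /diagI; plia.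
      by case: (B3 d hdR hn2) => e he hc; exists e; rewrite // !inE he orbT.
    case: (eqVneq (d.1 : nat) p) => hp.
    * pose e0 : 'I_n * 'I_n := (Ordinal hjn, Ordinal hqn).
      exists e0; first by rewrite !inE /= /diagI /=; move: hd; rewrite /diagI; plia.
      by rewrite /crossing /=; move: hd; rewrite /diagI; plia.
    * pose e0 : 'I_n * 'I_n := (Ordinal hpn, Ordinal hjn).
      exists e0; first by rewrite !inE /= /diagI /=; move: hd; rewrite /diagI; plia.
      by rewrite /crossing /=; move: hd; rewrite /diagI; plia.
- rewrite /present; case: eqP => //= hpj; apply/exists_inP.
  exists (Ordinal hpn, Ordinal hjn); rewrite /= ?eqxx //.
  by rewrite !inE /diagI /= eqxx /=; plia.
- rewrite /present; case: eqP => //= hpj; apply/exists_inP.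
  exists (Ordinal hjn, Ordinal hqn); rewrite /= ?eqxx //.
  by rewrite !inE /diagI /= !eqxx /= orbT; plia.
Qed.

Lemma apex_split p q j T : p < j < q -> q < n -> apex p q j T ->
  [/\ triI p j (T :&: [set d | diagI p j d]), triI j q (T :&: [set d | diagI j q d]) &
      T = glue p q j (T :&: [set d | diagI p j d], T :&: [set d | diagI j q d])].
Proof.
move=> hj hqn /and3P[hT a1 a2]; have [H1 H2 H3] := triIP hT.
have noStr : forall d, d \in T -> (d.2 <= j) || (j <= d.1).
  move=> d hd; have hd' := H1 d hd.
  case: (leqP (d.2:nat) j) => //= h2; case: (leqP j (d.1:nat)) => //= h1; exfalso.
  case: (eqVneq (d.1 : nat) p) => hp.
  - move: a2; rewrite /present => /orP[/eqP a2|/hasPP[f hf [f1 f2]]].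
    + by move: hd'; rewrite /diagI; plia.
    + by move: (H2 d f hd hf); rewrite /crossing f1 f2; move: hd'; rewrite /diagI; plia.
  - move: a1; rewrite /present => /orP[/eqP a1|/hasPP[f hf [f1 f2]]].
    + by move: hd'; rewrite /diagI; plia.
    + by move: (H2 d f hd hf); rewrite /crossing f1 f2; move: hd'; rewrite /diagI; plia.
have EjT : forall d, d \in Ej p q j -> d \in T.
  move=> d; rewrite inE => /andP[hd /orP[/andP[/eqP e1 /eqP e2]|/andP[/eqP e1 /eqP e2]]].
  - move: a1; rewrite /present => /orP[/eqP a1|/hasPP[f hf [f1 f2]]].
    + by move: hd; rewrite /diagI; plia.
    + by rewrite -(@pair_eq f d) // ?f1 ?f2 ?e1 ?e2.
  - move: a2; rewrite /present => /orP[/eqP a2|/hasPP[f hf [f1 f2]]].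
    + by move: hd; rewrite /diagI; plia.
    + by rewrite -(@pair_eq f d) // ?f1 ?f2 ?e1 ?e2.
split.
- apply: triI_intro.
  + by move=> d; rewrite !inE => /andP[].
  + by move=> d e; rewrite !inE => /andP[hd _] /andP[he _]; apply: H2.
  + move=> d hd; rewrite !inE hd andbT => hn.
    have hdq : diagI p q d by move: hd; rewrite /diagI; plia.
    case: (H3 d hdq hn) => e he hc; exists e => //.
    rewrite !inE he /=; move: (noStr e he) (H1 e he) hc hd; rewrite /diagI /crossing; plia.
- apply: triI_intro.
  + by move=> d; rewrite !inE => /andP[].
  + by move=> d e; rewrite !inE => /andP[hd _] /andP[he _]; apply: H2.
  + move=> d hd; rewrite !inE hd andbT => hn.
    have hdq : diagI p q d by move: hd; rewrite /diagI; plia.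
    case: (H3 d hdq hn) => e he hc; exists e => //.
    rewrite !inE he /=; move: (noStr e he) (H1 e he) hc hd; rewrite /diagI /crossing; plia.
- apply/setP => d; rewrite /glue !inE /=; case hd: (d \in T) => /=.
  + by move: (noStr d hd) (H1 d hd); rewrite /diagI; plia.
  + case hE: (d \in Ej p q j); first by rewrite (EjT d hE) in hd.
    by move: hE; rewrite inE => ->.
Qed.

Lemma apex_card p q j : p < j < q -> q < n ->
  #|[set T | apex p q j T]| = #|[set T | triI p j T]| * #|[set T | triI j q T]|.
Proof.
move=> hj hqn; rewrite -cardsX.
have inj : {in setX [set T | triI p j T] [set T | triI j q T] &, injective (glue p q j)}.
  move=> [X1 X2] [Y1 Y2]; rewrite !inE /= => /andP[hx1 hx2] /andP[hy1 hy2] he.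
  have [r1 r2] := glue_rec hj hx1 hx2; have [s1 s2] := glue_rec hj hy1 hy2.
  by congr pair; [rewrite -r1 -s1 he | rewrite -r2 -s2 he].
rewrite -(card_in_imset inj); apply: eq_card => T.
rewrite inE; apply/idP/imsetP.
- move=> hA; have [s1 s2 s3] := apex_split hj hqn hA.
  by exists (T :&: [set d | diagI p j d], T :&: [set d | diagI j q d]); rewrite // !inE s1 s2.
- case=> [[X1 X2]]; rewrite !inE /= => /andP[hx1 hx2] ->; exact: glue_apex.
Qed.

Lemma tri_count k : forall p q, q - p = k -> q < n ->
  #|[set T | triI p q T]| = catalan (q - p - 1).
Proof.
elim/ltn_ind: k => k IH p q hk hqn.
case: (leqP q p.+1) => hq.
  rewrite tri_small // cards1.
  by have -> : q - p - 1 = 0 by lia.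
rewrite tri_sum //.
rewrite (eq_big_nat _ _ (F2 := fun j => catalan (j - p - 1) * catalan (q - j - 1))); last first.
  move=> j hj; rewrite apex_card; [|lia|done].
  by rewrite (IH (j - p)) ?(IH (q - j)); try lia.
have -> : q - p - 1 = (q - p - 2).+1 by lia.
rewrite catalan_rec -{1}(add0n p.+1) big_addn big_mkord.
have -> : q - p.+1 = (q - p - 2).+1 by lia.
apply: eq_bigr => i _; have hi := ltn_ord i.
congr (catalan _ * catalan _); lia.
Qed.
End Poly.

Section Last.
Variable n : nat.
Implicit Types (T : {set 'I_n * 'I_n}) (d e : 'I_n * 'I_n).

Lemma tri_sum_cond p q (C : {set 'I_n * 'I_n} -> bool) (Q : nat -> bool) :
  p.+1 < q -> q < n ->
  (forall T j, p < j < q -> apex p q j T -> C T = Q j) ->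
  #|[set T : {set 'I_n * 'I_n} | triI p q T && C T]| = \sum_(p.+1 <= j < q) #|[set T : {set 'I_n * 'I_n} | apex p q j T && Q j]|.
Proof.
move=> hpq hqn hCQ.
rewrite cs.
under [RHS]eq_bigr => j _ do rewrite cs.
rewrite exchange_big /=; apply: eq_bigr => T _.
rewrite inE; case hT: (triI p q T) => /=.
- have [j0 [hj0 a1 a2]] := apex_exists hpq hqn hT.
  have hA0 : apex p q j0 T by rewrite /apex hT a1 a2.
  have mem : j0 \in index_iota p.+1 q by rewrite mem_index_iota; plia.
  rewrite (bigD1_seq j0 mem (iota_uniq _ _)) /= inE hA0 /= -(hCQ T j0 hj0 hA0).
  rewrite big1_seq ?addn0 // => j /andP[hne hj].
  rewrite inE; case hb: (apex p q j T) => //=.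
  move/and3P: hb => [_ b1 b2].
  move: hj; rewrite mem_index_iota => hj.
  have := apex_unique hT hj0 _ a1 a2 b1 b2; move: hne => /eqP hne.
  by move=> /(_ ltac:(plia)) h; exfalso; apply: hne; rewrite h.
- by rewrite big1_seq // => j _; rewrite inE /apex hT.
Qed.

Lemma is_diagE d : is_diag d = diagI 0 n.-1 d.
Proof. rewrite /is_diag /diagI; have := ltn_ord d.2; plia. Qed.

Lemma triangulationE T : triangulation T = triI 0 n.-1 T.
Proof.
rewrite /triangulation /triI; congr [&& _, _ & _].
  by apply: eq_forallb => d; rewrite is_diagE.
by apply: eq_forallb => d; rewrite is_diagE.
Qed.

Lemma cond_last m T : 4 <= n -> m <= n - 3 -> triI 0 n.-1 T ->
  [forall k : 'I_m, ~~ has_diag T n.-1 ((n.-1 + (k + 2)) %% n)] =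
  [forall k : 'I_m, ~~ hasP T k.+1 n.-1].
Proof.
move=> hn hm hT; have [H1 H2 H3] := triIP hT.
apply: eq_forallb => k; congr (~~ _).
have hk := ltn_ord k.
have -> : (n.-1 + (k + 2)) %% n = k.+1.
  have -> : n.-1 + (k + 2) = k.+1 + n by plia.
  rewrite modnDr modn_small //; plia.
apply/idP/idP.
- case/exists_inP => d hd /orP[] /andP[/eqP h1 /eqP h2].
  + by move: (H1 d hd) (ltn_ord d.2); rewrite /diagI; plia.
  + by apply/exists_inP; exists d; rewrite // h1 h2 !eqxx.
- case/exists_inP => d hd /andP[/eqP h1 /eqP h2].
  by apply/exists_inP; exists d => //; rewrite h1 h2 !eqxx orbT.
Qed.

Lemma count_last m : 4 <= n -> m <= n - 3 ->
  #|[set T : {set 'I_n * 'I_n} | triangulation T &&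
       [forall k : 'I_m, ~~ has_diag T n.-1 ((n.-1 + (k + 2)) %% n)]]|
  = \sum_(i < (n - 3 - m).+1) catalan i * catalan (n - 3 - i).
Proof.
move=> hn hm.
have e1 : [set T : {set 'I_n * 'I_n} | triangulation T &&
       [forall k : 'I_m, ~~ has_diag T n.-1 ((n.-1 + (k + 2)) %% n)]] =
       [set T : {set 'I_n * 'I_n} | triI 0 n.-1 T && [forall k : 'I_m, ~~ hasP T k.+1 n.-1]].
  apply/setP => T; rewrite !inE triangulationE.
  case hT: (triI 0 n.-1 T) => //=; exact: cond_last.
rewrite e1 (@tri_sum_cond 0 n.-1 _ (fun j => m < j)); try plia; last first.
  move=> T j hj /and3P[hT a1 a2]; have [H1 H2 H3] := triIP hT.
  apply/idP/idP.
  - move/forallP => hall; case: (ltnP m j) => // hjm; exfalso.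
    move: a2; rewrite /present => /orP[/eqP a2|hP]; first plia.
    have hj1 : j.-1 < m by plia.
    have := hall (Ordinal hj1); rewrite /= prednK ?hP //; plia.
  - move=> hmj; apply/forallP => k; apply/negP => /hasPP[f hf [f1 f2]].
    have hk := ltn_ord k.
    move: a1; rewrite /present => /orP[/eqP a1|/hasPP[g hg [g1 g2]]]; first plia.
    by move: (H2 g f hg hf); rewrite /crossing f1 f2 g1 g2; plia.
rewrite (@big_cat_nat _ _ _ m.+1) /=; try plia.
rewrite big_nat_cond big1 ?add0n; last first.
  move=> j /andP[hj _]; apply/eqP; rewrite cards_eq0; apply/eqP/setP => T.
  have -> : (m < j) = false by plia.
  by rewrite !inE andbF.
rewrite (eq_big_nat _ _ (F2 := fun j => catalan (j - 0 - 1) * catalan (n.-1 - j - 1))); last first.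
  move=> j hj.
  have -> : [set T : {set 'I_n * 'I_n} | apex 0 n.-1 j T && (m < j)] = [set T : {set 'I_n * 'I_n} | apex 0 n.-1 j T].
    have -> : (m < j) = true by plia.
    by apply/setP => T; rewrite !inE andbT.
  rewrite apex_card; try plia; rewrite (tri_count (k := j - 0)) ?(tri_count (k := n.-1 - j)) //; plia.
rewrite -{1}(add0n m.+1) big_addn big_mkord.
have -> : n.-1 - m.+1 = (n - 3 - m).+1 by plia.
rewrite (reindex_inj rev_ord_inj) /=.
apply: eq_bigr => i _; have hi := ltn_ord i.
rewrite mulnC; congr (catalan _ * catalan _); plia.
Qed.
End Last.

Section Rot.
Variable n : nat.
Implicit Types (T : {set 'I_n * 'I_n}) (d e : 'I_n * 'I_n).

Lemma modS_small x : x < n -> x.+1 %% n = if x.+1 == n then 0 else x.+1.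
Proof.
move=> hx; case: eqP => h; first by rewrite h modnn.
by rewrite modn_small //; plia.
Qed.

Lemma sucE (x : 'I_n) : (ordS x : nat) = if (x:nat).+1 == n then 0 else (x:nat).+1.
Proof. by rewrite /= modS_small. Qed.

Definition g d : 'I_n * 'I_n :=
  if (d.2 : nat) == n.-1 then (ordS d.2, ordS d.1) else (ordS d.1, ordS d.2).

Lemma gP d : (d.1 : nat) < d.2 ->
  ((d.2:nat) = n.-1 /\ ((g d).1 : nat) = 0 /\ ((g d).2 : nat) = (d.1 : nat).+1) \/
  ((d.2:nat).+1 < n /\ ((g d).1 : nat) = (d.1 : nat).+1 /\ ((g d).2 : nat) = (d.2:nat).+1).
Proof.
move=> h12; have h2 := ltn_ord d.2.
rewrite /g; case: eqP => h; cbn [fst snd]; rewrite !sucE; repeat (case: eqP => ?); plia.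
Qed.

Lemma g_diag d : is_diag d -> is_diag (g d).
Proof.
move=> hd; have h12 : (d.1 : nat) < d.2 by move: hd; rewrite /is_diag; plia.
have h2 := ltn_ord d.2.
by case: (gP h12) => [[a1 [a2 a3]]|[a1 [a2 a3]]]; move: hd; rewrite /is_diag a2 a3; plia.
Qed.

Lemma g_cross d e : is_diag d -> is_diag e -> crossing (g d) (g e) = crossing d e.
Proof.
move=> hd he.
have h12 : (d.1 : nat) < d.2 by move: hd; rewrite /is_diag; plia.
have k12 : (e.1 : nat) < e.2 by move: he; rewrite /is_diag; plia.
have h2 := ltn_ord d.2; have k2 := ltn_ord e.2.
rewrite /crossing.
case: (gP h12) => [[a1 [a2 a3]]|[a1 [a2 a3]]]; case: (gP k12) => [[b1 [b2 b3]]|[b1 [b2 b3]]];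
  rewrite a2 a3 b2 b3; move: hd he; rewrite /is_diag; plia.
Qed.

Lemma g_inj d e : is_diag d -> is_diag e -> g d = g e -> d = e.
Proof.
move=> hd he hg.
have h12 : (d.1 : nat) < d.2 by move: hd; rewrite /is_diag; plia.
have k12 : (e.1 : nat) < e.2 by move: he; rewrite /is_diag; plia.
have h2 := ltn_ord d.2; have k2 := ltn_ord e.2.
have c1 : ((g d).1 : nat) = (g e).1 by rewrite hg.
have c2 : ((g d).2 : nat) = (g e).2 by rewrite hg.
apply: pair_eq;
case: (gP h12) => [[a1 [a2 a3]]|[a1 [a2 a3]]]; case: (gP k12) => [[b1 [b2 b3]]|[b1 [b2 b3]]];
  move: c1 c2; rewrite a2 a3 b2 b3; plia.
Qed.

Lemma g_surj d' : is_diag d' -> exists2 d, is_diag d & g d = d'.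
Proof.
move=> hd; have h2 := ltn_ord d'.2.
have hn : n.-1 < n by plia.
case: (eqVneq (d'.1 : nat) 0) => h.
- have h1 : (d'.2 : nat).-1 < n by plia.
  pose d : 'I_n * 'I_n := (Ordinal h1, Ordinal hn).
  have hdd : is_diag d by rewrite /is_diag /=; move: hd; rewrite /is_diag; plia.
  exists d => //.
  have h12 : (d.1 : nat) < d.2 by rewrite /=; move: hd; rewrite /is_diag; plia.
  apply: pair_eq; case: (gP h12) => [[a1 [a2 a3]]|[a1 [a2 a3]]]; rewrite ?a2 ?a3;
    move: a1; rewrite /d /=; move: hd; rewrite /is_diag; plia.
- have h1 : (d'.1 : nat).-1 < n by have := ltn_ord d'.1; plia.
  have h1' : (d'.2 : nat).-1 < n by plia.
  pose d : 'I_n * 'I_n := (Ordinal h1, Ordinal h1').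
  have hdd : is_diag d by rewrite /is_diag /=; move: hd; rewrite /is_diag; plia.
  exists d => //.
  have h12 : (d.1 : nat) < d.2 by rewrite /=; move: hd; rewrite /is_diag; plia.
  apply: pair_eq; case: (gP h12) => [[a1 [a2 a3]]|[a1 [a2 a3]]]; rewrite ?a2 ?a3;
    move: a1; rewrite /d /=; move: hd; rewrite /is_diag; plia.
Qed.
End Rot.

Section Rot2.
Variable n : nat.
Implicit Types (T : {set 'I_n * 'I_n}) (d e : 'I_n * 'I_n).

Lemma triP T : triangulation T ->
  [/\ forall d, d \in T -> is_diag d,
      forall d e, d \in T -> e \in T -> ~~ crossing d e &
      forall d, is_diag d -> d \notin T -> exists2 e, e \in T & crossing d e].
Proof.
rewrite triangulationE => /triIP[H1 H2 H3]; split => //.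
- by move=> d hd; rewrite is_diagE H1.
- by move=> d; rewrite is_diagE; apply: H3.
Qed.

Lemma triP_intro T :
  (forall d, d \in T -> is_diag d) ->
  (forall d e, d \in T -> e \in T -> ~~ crossing d e) ->
  (forall d, is_diag d -> d \notin T -> exists2 e, e \in T & crossing d e) ->
  triangulation T.
Proof.
move=> H1 H2 H3; rewrite triangulationE; apply: triI_intro => //.
- by move=> d hd; rewrite -is_diagE H1.
- by move=> d; rewrite -is_diagE; apply: H3.
Qed.

Lemma phi_tri T : triangulation T -> triangulation ((@g n) @: T).
Proof.
case/triP => H1 H2 H3; apply: triP_intro.
- by move=> d /imsetP[d0 hd0 ->]; apply: g_diag; apply: H1.
- move=> d e /imsetP[d0 hd0 ->] /imsetP[e0 he0 ->].
  by rewrite g_cross ?H1 //; apply: H2.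
- move=> d' hd' hn; case: (g_surj hd') => d hd hgd.
  have hdT : d \notin T by apply/negP => h; move: hn; rewrite -hgd imset_f.
  case: (H3 d hd hdT) => e he hc; exists (@g n e); first exact: imset_f.
  by rewrite -hgd g_cross // H1.
Qed.

Lemma phi_mem T' d : triangulation T' -> is_diag d -> g d \in (@g n) @: T' -> d \in T'.
Proof.
case/triP => H1 _ _ hd /imsetP[d0 hd0 he].
by rewrite (g_inj hd (H1 d0 hd0) he).
Qed.

Lemma phi_inj T T' : triangulation T -> triangulation T' -> (@g n) @: T = (@g n) @: T' -> T = T'.
Proof.
move=> hT hT' he; have [H1 _ _] := triP hT; have [H1' _ _] := triP hT'.
apply/setP => d; apply/idP/idP => hd.
- by apply: phi_mem => //; [apply: H1 | rewrite -he imset_f].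
- by apply: phi_mem => //; [apply: H1' | rewrite he imset_f].
Qed.

Definition Cnt m (b : nat) := #|[set T : {set 'I_n * 'I_n} | triangulation T &&
       [forall k : 'I_m, ~~ has_diag T b ((b + (k + 2)) %% n)]]|.

Lemma phi_cond m b T : triangulation T -> b < n ->
  [forall k : 'I_m, ~~ has_diag T b ((b + (k + 2)) %% n)] ->
  [forall k : 'I_m, ~~ has_diag ((@g n) @: T) (b.+1 %% n) ((b.+1 %% n + (k + 2)) %% n)].
Proof.
move=> hT hb /forallP hall; have [H1 _ _] := triP hT.
apply/forallP => k; apply/negP => /exists_inP[d' /imsetP[d hd ->] hc].
move: (hall k) => /negP; apply.
apply/exists_inP; exists d => //.
have hn : 0 < n by plia.
set w := (b + (k + 2)) %% n.
have hw : w < n by rewrite ltn_pmod.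
have ev : (b.+1 %% n + (k + 2)) %% n = w.+1 %% n.
  rewrite /w modnDml -[((b + (k + 2)) %% n).+1]addn1 modnDml; congr (_ %% _); plia.
move: hc; rewrite ev !modS_small //.
have h12 : (d.1 : nat) < d.2 by move: (H1 d hd); rewrite /is_diag; plia.
have h2 := ltn_ord d.2.
case: (gP h12) => [[a1 [a2 a3]]|[a1 [a2 a3]]]; rewrite a2 a3;
  repeat (case: ifP => [/eqP ?|/negbT ?]); plia.
Qed.

Lemma Cnt_step m b : b < n -> Cnt m b <= Cnt m (b.+1 %% n).
Proof.
move=> hb; rewrite /Cnt.
set A := [set T : {set 'I_n * 'I_n} | _].
have inj : {in A &, injective (fun T => (@g n) @: T)}.
  move=> T T'; rewrite !inE => /andP[hT _] /andP[hT' _]; exact: phi_inj.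
rewrite -(card_in_imset inj); apply: subset_leq_card; apply/subsetP => T' /imsetP[T hT ->].
move: hT; rewrite !inE => /andP[hT hc].
by rewrite phi_tri //= phi_cond.
Qed.

Lemma Cnt_iter m b j : 0 < n -> b < n -> Cnt m b <= Cnt m ((b + j) %% n).
Proof.
move=> hn hb; elim: j => [|j IH]; first by rewrite addn0 modn_small.
apply: (leq_trans IH); apply: (leq_trans (Cnt_step m (ltn_pmod _ hn))).
by rewrite -[((b + j) %% n).+1]addn1 modnDml addn1 addnS.
Qed.

Lemma Cnt_rot m (a : 'I_n) : Cnt m a = Cnt m n.-1.
Proof.
have hn : 0 < n by have := ltn_ord a; plia.
apply/eqP; rewrite eqn_leq; apply/andP; split.
- have := Cnt_iter m (n.-1 - a) hn (ltn_ord a).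
  have ha := ltn_ord a.
  have -> : a + (n.-1 - a) = n.-1 by plia.
  by rewrite modn_small //; plia.
- have hn1 : n.-1 < n by plia.
  have := Cnt_iter m a.+1 hn hn1.
  have -> : n.-1 + a.+1 = a + n by plia.
  by rewrite modnDr modn_small.
Qed.
End Rot2.

Theorem lemma3p4 (n : nat) (a : 'I_n) (m : nat) :
  4 <= n -> m <= n - 3 ->
  #|[set T : {set 'I_n * 'I_n} | triangulation T &&
       [forall k : 'I_m, ~~ has_diag T a ((a + (k + 2)) %% n)]]|
  = \sum_(i < (n - 3 - m).+1) catalan i * catalan (n - 3 - i).
Proof.
move=> hn hm.
have := Cnt_rot m a; rewrite /Cnt => ->.
exact: count_last.
Qed.
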